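(* Let $K$ be a finite field of characteristic $p$ and order $q$, let $s$ be a positive integer with $\gcd(s,q-1)=1$, and let $\tau$ be the permutation of $\mathcal{W}_{K,s}$ defined below. Then $\tau$ is a single cycle (i.e., a cycle containing all elements of $\mathcal{W}_{K,s}$) if and only if $K=\mathbb{F}_2$; in that case $s$ is degenerate and $\tau$ is a $1$-cycle.
   Context: $\zeta=\exp(2\pi i/p)$, $\psi(x)=\zeta^{\mathrm{Tr}(x)}$ with $\mathrm{Tr}$ the absolute trace of $K$ to $\mathbb{F}_p$; $W_u=\sum_{x\in K}\psi(x^s-ux)$; $\mathcal{W}_{K,s}=\{W_u:u\in K^\times\}$. Let $\gamma$ be a primitive element of $\mathbb{F}_p$ and $\sigma\in\mathrm{Gal}(\mathbb{Q}(\zeta)/\mathbb{Q})$ with $\sigma(\zeta)=\zeta^\gamma$; it is known that $\sigma(W_u)=W_{\gamma^{1-1/s}u}$ (with $1/s$ the inverse of $s$ mod $p-1$), so $\sigma$ restricts to a permutation $\tau$ of $\mathcal{W}_{K,s}$. The exponent $s$ is degenerate over $K$ if $s\equiv p^k\pmod{q-1}$ for some integer $k$. *)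

(* Defs.v *)
From mathcomp Require Import all_boot all_order all_algebra all_field.
Set Implicit Arguments. Unset Strict Implicit. Unset Printing Implicit Defensive.
Import GRing.Theory Num.Theory.
Local Open Scope ring_scope.

(* Absolute trace of K over its prime field F_p: Tr(x) = sum_{i < n} x^(p^i),
   where #|K| = p^n (n = logn p #|K|). The value lies in the prime subfield. *)
Definition abs_trace (K : finFieldType) (p : nat) (x : K) : K :=
  \sum_(i < logn p #|K|) x ^+ (p ^ i).

Definition trace_nat (K : finFieldType) (p : nat) (x : K) : nat :=
  find (fun k : nat => k%:R == abs_trace p x) (iota 0 p).

Definition psi (K : finFieldType) (p : nat) (zeta : algC) (x : K) : algC :=
  zeta ^+ trace_nat p x.

Definition Wsum (K : finFieldType) (p : nat) (zeta : algC) (s : nat) (u : K)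
  : algC := \sum_(x : K) psi p zeta (x ^+ s - u * x).

Definition Wset (K : finFieldType) (p : nat) (zeta : algC) (s : nat)
  : seq algC := undup [seq Wsum p zeta s u | u <- enum K & u != 0].

Definition single_cycle (f : algC -> algC) (S : seq algC) : Prop :=
  forall w w', w \in S -> w' \in S -> exists n : nat, iter n f w = w'.

Definition degenerate (K : finFieldType) (p s : nat) : Prop :=
  exists k : nat, s = p ^ k %[mod #|K|.-1].

(* Main.v *)
Require Import Defs.
From mathcomp Require Import all_boot all_order all_algebra all_field.
From mathcomp Require Import ring zify.
Import GRing.Theory Num.Theory.
Local Open Scope ring_scope.
Set Implicit Arguments. Unset Strict Implicit. Unset Printing Implicit Defensive.

Section Trace.
Variables (K : finFieldType) (p : nat).
Hypothesis hp : p \in [pchar K].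

Let n := logn p #|K|.

Lemma cardK : #|K| = (p ^ n)%N.
Proof. exact: (card_pprimeChar hp). Qed.

Lemma prime_p : prime p.
Proof. exact: pcharf_prime hp. Qed.

Lemma frobD i (x y : K) : (x + y) ^+ (p ^ i) = x ^+ (p ^ i) + y ^+ (p ^ i).
Proof.
elim: i => [|i IH]; first by rewrite !expn0 !expr1.
by rewrite expnSr !exprM IH -!(pFrobenius_autE hp) rmorphD.
Qed.

Lemma frobn i k : (k%:R : K) ^+ (p ^ i) = k%:R.
Proof.
elim: i => [|i IH]; first by rewrite expn0 expr1.
by rewrite expnSr exprM IH -(pFrobenius_autE hp) rmorph_nat.
Qed.

Lemma frob_card (x : K) : x ^+ (p ^ n) = x.
Proof. by rewrite -cardK expf_card. Qed.

Lemma traceD (x y : K) : abs_trace p (x + y) = abs_trace p x + abs_trace p y.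
Proof. by rewrite /abs_trace -big_split; apply: eq_bigr => i _; rewrite frobD. Qed.

Lemma traceMn k (x : K) : abs_trace p (k%:R * x) = k%:R * abs_trace p x.
Proof. by rewrite /abs_trace mulr_sumr; apply: eq_bigr => i _; rewrite exprMn frobn. Qed.

Lemma trace_frob (x : K) : (abs_trace p x) ^+ p = abs_trace p x.
Proof.
rewrite /abs_trace -(pFrobenius_autE hp) rmorph_sum /=.
have n_gt0 : (0 < n)%N.
  rewrite lt0n; apply/eqP => n0.
  by have := finNzRing_gt1 K; rewrite cardK -/n n0 expn0.
have fc := frob_card x; rewrite /n in n_gt0 fc *.
move: n_gt0 fc; case: (logn p #|K|) => // m _ fc.
rewrite big_ord_recr big_ord_recl /= pFrobenius_autE -exprM -expnSr fc expn0 expr1 addrC.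
congr (_ + _); apply: eq_bigr => i _.
by rewrite /bump /= add1n pFrobenius_autE -exprM -expnSr.
Qed.

Lemma prime_field_elt (y : K) : y ^+ p = y -> exists2 k, (k < p)%N & k%:R = y.
Proof.
move=> yp.
have pp := prime_p.
have p_gt1 := prime_gt1 pp.
pose P : {poly K} := 'X^p - 'X.
have P0 : P != 0.
  by rewrite /P -size_poly_eq0 size_polyDl ?size_polyXn // size_polyN size_polyX ltnS.
have szP : size P = p.+1 by rewrite /P size_polyDl ?size_polyXn // size_polyN size_polyX ltnS.
pose rs := [seq (k%:R : K) | k <- iota 0 p].
have rs_roots : all (root P) rs.
  apply/allP => z /mapP [k _ ->]; rewrite /root /P !hornerE.
  by rewrite -(pFrobenius_autE hp) rmorph_nat subrr.
have rs_uniq : uniq rs.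
  rewrite map_inj_in_uniq ?iota_uniq // => a b; rewrite !mem_iota /= !add0n => ha hb.
  move/eqP; wlog le_ab : a b ha hb / (a <= b)%N.
    by move=> H; case/orP: (leq_total a b) => ?; [|rewrite eq_sym]; move/H => ->.
  rewrite eq_sym -subr_eq0 -natrB // -(dvdn_pcharf hp) => dv.
  apply/eqP; rewrite eqn_leq le_ab /= leqNgt; apply/negP => lt.
  have := dvdn_leq _ dv; rewrite subn_gt0 lt => /(_ isT).
  by rewrite leqNgt (leq_ltn_trans (leq_subr _ _) hb).
case: (boolP (y \in rs)) => [/mapP [k]|yn]; first by rewrite mem_iota => /andP[_ ?] ->; exists k.
have := max_poly_roots P0 (rs := y :: rs); rewrite /= rs_roots rs_uniq yn szP size_map size_iota ltnn.
by rewrite /root /P !hornerE yp subrr eqxx => /(_ isT isT).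
Qed.

Lemma trace_natP (x : K) : (trace_nat p x < p)%N /\ (trace_nat p x)%:R = abs_trace p x.
Proof.
have [k kp ke] := @prime_field_elt _ (trace_frob x).
have hasP : has (fun k : nat => k%:R == abs_trace p x) (iota 0 p).
  by apply/hasP; exists k; rewrite ?mem_iota ?ke //.
have lt : (trace_nat p x < p)%N by have := hasP; rewrite has_find size_iota.
split => //.
by have := nth_find 0 hasP; rewrite -/(trace_nat p x) nth_iota ?add0n // => /eqP.
Qed.


Lemma natr_inj_lt a b : (a < p)%N -> (b < p)%N -> (a%:R : K) = b%:R -> a = b.
Proof.
move=> ha hb; move/eqP; wlog le_ab : a b ha hb / (a <= b)%N.
  by move=> H; case/orP: (leq_total a b) => ?; [|rewrite eq_sym]; move/H => ->.
rewrite eq_sym -subr_eq0 -natrB // -(dvdn_pcharf hp) => dv.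
apply/eqP; rewrite eqn_leq le_ab /= leqNgt; apply/negP => lt.
have := dvdn_leq _ dv; rewrite subn_gt0 lt => /(_ isT).
by rewrite leqNgt (leq_ltn_trans (leq_subr _ _) hb).
Qed.

Lemma natr_modE a b : (a%:R : K) = b%:R -> (a %% p = b %% p)%N.
Proof.
have p0 : (0 < p)%N by rewrite prime_gt0 // prime_p.
by move=> e; apply: natr_inj_lt; rewrite ?ltn_pmod // !(GRing.natr_mod_pchar hp).
Qed.

Lemma trace0 : abs_trace p (0 : K) = 0.
Proof. by have := traceMn 0 0; rewrite !mul0r. Qed.

Lemma trace_nonzero : exists y : K, abs_trace p y != 0.
Proof.
case: (pickP (fun y : K => abs_trace p y != 0)) => [y Hy|H]; first by exists y.
exfalso.
have p_gt1 := prime_gt1 prime_p.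
have n_gt0 : (0 < n)%N.
  rewrite lt0n; apply/eqP => n0.
  by have := finNzRing_gt1 K; rewrite cardK -/n n0 expn0.
have [m nE] : exists m, n = m.+1 by exists n.-1; rewrite prednK.
pose P : {poly K} := \sum_(i < m.+1) 'X^(p ^ i).
have PE x : P.[x] = abs_trace p x.
  by rewrite /P /abs_trace -/n nE horner_sum; apply: eq_bigr => i _; rewrite hornerXn.
have cK : #|K| = (p ^ m.+1)%N by rewrite -nE cardK.
have szQ : (size (\sum_(i < m) 'X^(p ^ i) : {poly K})%R < size ('X^(p ^ m) : {poly K}))%N.
  rewrite size_polyXn ltnS; apply: leq_trans (size_sum _ _ _) _.
  apply/bigmax_leqP => i _; rewrite size_polyXn ltn_exp2l //.
have szP : size P = (p ^ m).+1 by rewrite /P big_ord_recr /= addrC size_polyDl // size_polyXn.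
have P0 : P != 0 by rewrite -size_poly_eq0 szP.
have allR : all (root P) (enum K).
  by apply/allP => x _; rewrite /root PE; have := H x; rewrite /= => /negbFE.
have := max_poly_roots P0 allR (enum_uniq _).
rewrite szP -cardE cK expnS ltnS leqNgt.
by rewrite ltn_Pmull // expn_gt0 ltnW.
Qed.

End Trace.

Section Psi.
Variables (K : finFieldType) (p : nat) (zeta : algC).
Hypothesis hp : p \in [pchar K].
Hypothesis hz : p.-primitive_root zeta.

Lemma tnE_aux (y : K) : (trace_nat p y)%:R = abs_trace p y.
Proof. by have [_ ->] := trace_natP hp y. Qed.

Lemma psiE t (y : K) : t%:R = abs_trace p y -> psi p zeta y = zeta ^+ t.
Proof.
move=> e; rewrite /psi -(prim_expr_mod hz) -[RHS](prim_expr_mod hz); congr (_ ^+ _).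
by apply: (natr_modE hp); rewrite tnE_aux e.
Qed.

Lemma psi_tn (y : K) : psi p zeta y = zeta ^+ trace_nat p y.
Proof. by []. Qed.

Lemma tnE (y : K) : (trace_nat p y)%:R = abs_trace p y.
Proof. by have [_ ->] := trace_natP hp y. Qed.

Lemma psi0 : psi p zeta (0 : K) = 1.
Proof. by rewrite (@psiE 0) ?expr0 // trace0. Qed.

Lemma psiD (x y : K) : psi p zeta (x + y) = psi p zeta x * psi p zeta y.
Proof.
by rewrite (@psiE (trace_nat p x + trace_nat p y)) ?exprD // natrD !tnE (traceD hp).
Qed.

Lemma psiMn k (y : K) : psi p zeta (k%:R * y) = psi p zeta y ^+ k.
Proof.
by rewrite (@psiE (trace_nat p y * k)) ?exprM // natrM tnE (traceMn hp) mulrC.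
Qed.

Lemma psi_Aint (y : K) : psi p zeta y \in Aint.
Proof. by rewrite rpredX // (Aint_prim_root hz). Qed.

Lemma sum_psi : \sum_(y : K) psi p zeta y = 0.
Proof.
have [y0 ny0] := trace_nonzero hp.
have ne1 : psi p zeta y0 != 1.
  rewrite psi_tn -(prim_order_dvd hz) (dvdn_pcharf hp) tnE //.
have e : \sum_(y : K) psi p zeta y = psi p zeta y0 * \sum_(y : K) psi p zeta y.
  rewrite {1}(reindex_inj (addIr y0)) /= mulr_sumr; apply: eq_bigr => y _.
  by rewrite psiD mulrC.
have : (1 - psi p zeta y0) * \sum_(y : K) psi p zeta y = 0 by rewrite mulrBl mul1r -e subrr.
by move/eqP; rewrite mulf_eq0 subr_eq0 eq_sym (negbTE ne1) => /eqP.
Qed.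

Lemma sum_psiM (z : K) : z != 0 -> \sum_(u : K) psi p zeta (u * z) = 0.
Proof. by move=> nz; have := sum_psi; rewrite (reindex_inj (mulIf nz)). Qed.

End Psi.

Section Weil.
Variables (K : finFieldType) (p s : nat) (zeta : algC).
Hypothesis hp : p \in [pchar K].
Hypothesis hz : p.-primitive_root zeta.
Hypothesis hs : (0 < s)%N.
Hypothesis hcop : coprime s #|K|.-1.

Local Notation W := (Wsum p zeta s).
Local Notation ps := (psi p zeta).

Lemma expf_unit (x : K) : x != 0 -> x ^+ #|K|.-1 = 1.
Proof.
move=> nz; apply: (mulfI nz); rewrite mulr1 -exprS prednK ?expf_card //.
exact: (ltn_trans _ (finNzRing_gt1 K)).
Qed.

Lemma pow_inv : exists t, forall x : K, (x ^+ s) ^+ t = x.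
Proof.
have [[a b] /= e] := coprimeP _ hs hcop.
have e' : (a * s = b * #|K|.-1 + 1)%N.
  by rewrite -e addnC subnK // ltnW // -subn_gt0 e.
exists a => x; rewrite -exprM mulnC e'.
have [->|nz] := eqVneq x 0; first by rewrite expr0n addn1.
by rewrite exprD expr1 mulnC exprM expf_unit // expr1n mul1r.
Qed.

Lemma pow_inj : injective (fun x : K => x ^+ s).
Proof. by have [t ht] := pow_inv; move=> x y /= e; rewrite -(ht x) -(ht y) e. Qed.

Lemma pow_surj (a : K) : exists y, y ^+ s = a.
Proof. by have [t ht] := pow_inv; exists (a ^+ t); rewrite exprAC ht. Qed.

Lemma W0 : W (0 : K) = 0.
Proof.
have := sum_psi hp hz; rewrite (reindex_inj pow_inj) /= => <-.
by apply: eq_bigr => x _; rewrite mul0r subr0.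
Qed.

Lemma sumW : \sum_(u : K) W u = #|K|%:R.
Proof.
rewrite /Wsum exchange_big /= (bigD1 0) //=.
rewrite [X in _ + X]big1 ?addr0 => [|x nx].
  rewrite -sumr_const; apply: eq_bigr => u _.
  by rewrite expr0n (negbTE (lt0n_neq0 hs)) mulr0 subr0 psi0.
under eq_bigr => u _ do rewrite (psiD hp hz) -mulrN.
by rewrite -mulr_sumr (sum_psiM hp hz) ?mulr0 // oppr_eq0.
Qed.

Lemma sumW1 : \sum_(u : K | u != 0) W u = #|K|%:R.
Proof. by rewrite -sumW [RHS](bigD1 (0 : K)) //= W0 add0r. Qed.

Variables (sigma : {rmorphism algC -> algC}) (g : nat).
Hypothesis hsig : sigma zeta = zeta ^+ g.

Lemma sig_psi (y : K) : sigma (ps y) = ps (g%:R * y).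
Proof. by rewrite (psiMn hp hz) psi_tn rmorphXn hsig exprAC. Qed.

Lemma iterW k u : iter k sigma (W u) = \sum_(x : K) ps ((g ^ k)%:R * (x ^+ s - u * x)).
Proof.
elim: k => [|k IH]; first by apply: eq_bigr => x _; rewrite expn0 mul1r.
rewrite iterS IH rmorph_sum; apply: eq_bigr => x _.
by rewrite sig_psi mulrA -natrM -expnS.
Qed.

Lemma sig_Wsum (gnz : (g%:R : K) != 0) :
  exists2 c : K, c != 0 & forall u, sigma (W u) = W (c * u).
Proof.
have [a ha] := pow_surj (g%:R : K)^-1.
have anz : a != 0.
  by apply/eqP => a0; move: ha; rewrite a0 expr0n (negbTE (lt0n_neq0 hs)) => /esym /eqP; rewrite invr_eq0 (negbTE gnz).
exists (g%:R * a); first by rewrite mulf_neq0.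
move=> u; have := iterW 1 u; rewrite /= expn1 => ->.
rewrite (reindex_inj (mulfI anz)) /=; apply: eq_bigr => y _; congr ps.
have e : (g%:R : K) * a ^+ s = 1 by rewrite ha mulfV.
have -> : (g%:R : K) * ((a * y) ^+ s - u * (a * y)) = ((g%:R : K) * a ^+ s) * y ^+ s - (g%:R * a * u) * y.
  by rewrite exprMn; ring.
by rewrite e mul1r.
Qed.

Lemma sig_fix h (hh : (g ^ h)%:R = - 1 :> K) (hs1 : (- 1 : K) ^+ s = - 1) (u : K) :
  iter h sigma (W u) = W (u : K).
Proof.
rewrite iterW hh (reindex_inj oppr_inj) /=; apply: eq_bigr => x _; congr ps.
have -> : (- x) ^+ s = (- 1) ^+ s * x ^+ s by rewrite -exprMn mulN1r.
by rewrite hs1; ring.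
Qed.

End Weil.

Lemma sum_undup (L : seq algC) (f : algC -> algC) :
  \sum_(w <- L) f w = \sum_(w <- undup L) f w *+ count_mem w L.
Proof.
rewrite -big_undup_iterop_count; apply: eq_bigr => w _.
by rewrite Monoid.iteropE iter_addr_0.
Qed.

Lemma size_undup_count (T : eqType) (L : seq T) :
  \sum_(w <- undup L) count_mem w L = size L.
Proof.
rewrite -sum1_size -[RHS](big_undup_iterop_count addn); apply: eq_bigr => w _.
by rewrite Monoid.iteropE /= iter_addn_0 mul1n.
Qed.

Section Count.
Variables (K : finFieldType) (W : K -> algC) (sigma : {rmorphism algC -> algC}) (c : K).
Hypothesis cnz : c != 0.
Hypothesis hW : forall u, sigma (W u) = W (c * u).

Let Lu := [seq u <- enum K | u != 0].

Lemma count_sig x : count_mem (sigma x) (map W Lu) = count_mem x (map W Lu).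
Proof.
rewrite !count_map.
have pe : perm_eq Lu (map (fun u => c * u) Lu).
  apply: uniq_perm; first by rewrite filter_uniq ?enum_uniq.
    by rewrite (map_inj_uniq (mulfI cnz)) filter_uniq ?enum_uniq.
  move=> y; rewrite mem_filter mem_enum andbT; apply/idP/mapP.
    move=> ny; exists (c^-1 * y); last by rewrite mulrA divff // mul1r.
    by rewrite mem_filter mem_enum andbT mulf_neq0 ?invr_eq0.
  by move=> [u]; rewrite mem_filter mem_enum andbT => nu ->; rewrite mulf_neq0.
rewrite (permP pe) count_map; apply: eq_count => u /=.
by rewrite -hW (inj_eq (fmorph_inj sigma)).
Qed.

Lemma count_iter k x : count_mem (iter k sigma x) (map W Lu) = count_mem x (map W Lu).
Proof. by elim: k => //= k IH; rewrite count_sig. Qed.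

End Count.


Lemma h_exists (p g q : nat) : prime p -> (p %| q)%N -> (1 < q)%N ->
  (p.-1).-primitive_root (g%:R : 'F_p) ->
  exists h, [/\ (0 < h)%N, (p %| (g ^ h).+1)%N, (q != 2 -> h < q.-1)%N & (p = 2 -> h = 1)%N].
Proof.
move=> pp pq q1 hg.
have p_gt1 := prime_gt1 pp.
have pq' : (p <= q)%N by apply: dvdn_leq; lia.
have chF := pchar_Fp pp.
set x := (g%:R : 'F_p) in hg.
have [p2|podd] := even_prime pp.
  exists 1%N; split => //.
  - rewrite (dvdn_pcharf chF) -[(g ^ 1).+1]addn1 natrD expn1 -/x.
    have d1 : (p.-1 %| 1)%N by rewrite p2.
    rewrite (prim_order_dvd hg) expr1 in d1; rewrite (eqP d1).
    have e : (2%:R : 'F_p) = 0 by rewrite -(pcharf0 chF); congr (_%:R); rewrite p2.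
    by apply/eqP; exact: e.
  - move=> q2; have : (2 %| q)%N by rewrite -p2.
    by move/dvdnP => [r qr]; lia.
have p3 : (2 < p)%N.
  by move: p_gt1; rewrite leq_eqVlt => /orP [/eqP p2|//]; rewrite -p2 in podd.
have hE : ((p.-1)./2 * 2 = p.-1)%N.
  have := odd_double_half p.-1.
  have -> : odd p.-1 = false.
    by move: podd; rewrite -{1}(prednK (ltnW p_gt1)) /= => /negbTE.
  by rewrite add0n -muln2.
exists (p.-1)./2; split.
- by rewrite -divn2; lia.
- rewrite (dvdn_pcharf chF) -[(g ^ _).+1]addn1 natrD natrX -/x.
  set y := x ^+ _.
  have y2 : y ^+ 2 = 1 by rewrite -exprM hE prim_expr_order.
  have yn1 : y != 1.
    rewrite -(prim_order_dvd hg); apply/negP => /dvdn_leq.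
    by rewrite -divn2; lia.
  have : (y - 1) * (y + 1) == 0 by rewrite mulrDr mulr1 mulrBl mul1r -expr2 y2 addrA subrK subrr.
  by rewrite mulf_eq0 subr_eq0 (negbTE yn1).
- by move=> _; rewrite -divn2; lia.
- by move=> p2; rewrite p2 in p3.
Qed.

Unset Implicit Arguments.

Theorem proposition2p5 (K : finFieldType) (p s : nat) (zeta : algC) (g : nat)
  (sigma : {rmorphism algC -> algC}) :
  p \in [pchar K] ->
  (0 < s)%N ->
  coprime s #|K|.-1 ->
  p.-primitive_root zeta ->
  (p.-1).-primitive_root (g%:R : 'F_p) ->
  sigma zeta = zeta ^+ g ->
  (single_cycle sigma (Wset K p zeta s) <-> #|K| = 2%N) /\
  (#|K| = 2%N ->
     degenerate K p s /\ size (Wset K p zeta s) = 1%N /\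
     (forall w, w \in Wset K p zeta s -> sigma w = w)).
Proof.
move=> hp hs hcop hz hg hsig.
have pp := pcharf_prime hp.
have p_gt1 := prime_gt1 pp.
have q_gt1 : (1 < #|K|)%N := finNzRing_gt1 K.
have qE := card_pprimeChar hp.
set q := #|K| in q_gt1 qE hcop *.
set n := logn p _ in qE.
have n_gt0 : (0 < n)%N.
  by rewrite lt0n; apply/eqP => n0; rewrite qE n0 expn0 in q_gt1.
have pq : (p %| q)%N by rewrite qE -(prednK n_gt0) expnS dvdn_mulr.
have chF := pchar_Fp pp.
have gK : (g%:R : K) != 0.
  by rewrite -(dvdn_pcharf hp) (dvdn_pcharf chF) (prim_root_eq0 hg) -subn1 subn_eq0 -ltnNge.
have [h [h_gt0 hdv hq h2]] := h_exists pp pq q_gt1 hg.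
have hhK : (g ^ h)%:R = -1 :> K.
  by apply/eqP; rewrite -addr_eq0 -[1]/(1%:R) -natrD addn1 -(dvdn_pcharf hp).
have hs1 : (-1 : K) ^+ s = -1.
  case: (boolP (odd s)) => [os|es]; first by rewrite -signr_odd os expr1.
  have p2 : p = 2%N.
    have : ~~ (2 %| q.-1)%N.
      apply/negP => d2; move: hcop; rewrite /coprime => /eqP g1.
      have : (2 %| gcdn s q.-1)%N by rewrite dvdn_gcd d2 dvdn2 es.
      by rewrite g1.
    rewrite qE dvdn2 negbK => oq.
    have : (2 %| p ^ n)%N.
      by move: oq; rewrite -qE dvdn2; case: (q) q_gt1 => // k _ /=; rewrite negbK.
    by rewrite Euclid_dvdX // n_gt0 andbT dvdn_prime2 // => /eqP.
  rewrite p2 in hp; by rewrite (oppr_pchar2 hp) expr1n.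
have [c cnz hW] := sig_Wsum hp hz hs hcop hsig gK.
have fixW (u : K) : iter h sigma (Wsum p zeta s u) = Wsum p zeta s u.
  exact: (sig_fix hp hz hsig hhK hs1).
set Lu := [seq u <- enum K | u != 0].
set L := map (Wsum p zeta s) Lu.
have VE : Wset K p zeta s = undup L by [].
rewrite VE.
have szL : size L = q.-1.
  rewrite size_map size_filter.
  have := count_predC (pred1 (0 : K)) (enum K).
  rewrite -cardE -/q (count_uniq_mem _ (enum_uniq K)) mem_enum /=.
  by move=> <-; rewrite add1n.
have w0V : Wsum p zeta s (1 : K) \in undup L.
  by rewrite mem_undup map_f // mem_filter mem_enum oner_neq0.
have VW w : w \in undup L -> exists u : K, w = Wsum p zeta s u.
  by rewrite mem_undup => /mapP [u _ ->]; exists u.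
have sumL : \sum_(w <- L) w = q%:R.
  rewrite big_map -(sumW1 hp hz hs hcop) -[RHS]big_filter.
  apply: perm_big; apply: uniq_perm; rewrite ?filter_uniq ?enum_uniq ?index_enum_uniq //.
  by move=> u; rewrite /Lu mem_filter mem_enum [RHS]mem_filter mem_index_enum.
have V_gt0 : (0 < size (undup L))%N by case: (undup L) w0V.
have q2_facts : q = 2%N -> size (undup L) = 1%N /\ (forall w, w \in undup L -> sigma w = w).
  move=> q2; split.
    by apply/eqP; rewrite eqn_leq V_gt0 andbT (leq_trans (size_undup _)) // szL q2.
  have p2 : p = 2%N.
    by apply/eqP; rewrite -dvdn_prime2 // -q2.
  move=> w /VW [u ->]; have := fixW u; by rewrite h2.
split; last first.
  move=> q2; have [sz fx] := q2_facts q2; split => //.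
  by exists 0%N; rewrite -/q q2 !modn1.
split; last first.
  move=> q2; have [sz _] := q2_facts q2.
  move=> w w'; case: (undup L) sz => [|x [|]] // _.
  by rewrite !inE => /eqP -> /eqP ->; exists 0%N.
move=> sc.
set w0 := Wsum p zeta s (1 : K) in w0V.
set V := undup L in V_gt0 w0V VW *.
have iterh j : iter (j * h) sigma w0 = w0.
  by elim: j => // j IH; rewrite mulSn iterD IH fixW.
have szV : (size V <= h)%N.
  rewrite -(size_iota 0 h) -(size_map (fun k => iter k sigma w0)).
  apply: uniq_leq_size; first exact: undup_uniq.
  move=> w /(sc w0 w w0V) [k <-]; apply/mapP; exists (k %% h)%N.
    by rewrite mem_iota add0n ltn_pmod.
  by rewrite {1}(divn_eq k h) addnC iterD iterh.
set m := count_mem w0 L.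
have cnt w : w \in V -> count_mem w L = m.
  by move=> /(sc w0 w w0V) [k <-]; rewrite /L /Lu (count_iter cnz hW).
have e1 : (size V * m = q.-1)%N.
  rewrite -szL -(size_undup_count L) (eq_big_seq (fun _ => m)); last by move=> w /cnt.
  by rewrite big_const_seq count_predT iter_addn_0 mulnC.
have q1_gt0 : (0 < q.-1)%N by rewrite -subn1 subn_gt0.
have m_gt0 : (0 < m)%N.
  by move: e1; case: (m) => //; rewrite muln0 => q0; rewrite -q0 in q1_gt0.
have e2 : (\sum_(w <- V) w) *+ m = q%:R.
  by rewrite -sumrMnl -sumL sum_undup; apply: eq_big_seq => w /cnt ->.
have SA : \sum_(w <- V) w \in Aint.
  rewrite big_seq; apply: rpred_sum => w /VW [u ->].
  by rewrite /Wsum; apply: rpred_sum => x _; apply: psi_Aint hz _.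
have mnz : (m%:R : algC) != 0 by rewrite pnatr_eq0 -lt0n.
have Sq : \sum_(w <- V) w = q%:R / m%:R by rewrite -e2 -[(\sum_(w <- V) w) *+ m]mulr_natr mulfK.
have Snat : \sum_(w <- V) w \is a Num.nat.
  have Sint : \sum_(w <- V) w \is a Num.int.
    by apply: Cint_rat_Aint => //; rewrite Sq rpred_div ?rpred_nat.
  by rewrite natrEint Sint /= Sq divr_ge0 ?ler0n.
have [k Sk] := natrP Snat.
have km : (k * m = q)%N.
  by apply/eqP; rewrite -(eqr_nat algC) natrM mulr_natr -Sk e2.
have m1 : m = 1%N.
  apply/eqP; rewrite -dvdn1.
  have -> : 1%N = (q - q.-1)%N by rewrite -{1}(prednK (ltnW q_gt1)) subSnn.
  by apply: dvdn_sub; [rewrite -km dvdn_mull | rewrite -e1 dvdn_mull].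
rewrite m1 muln1 in e1.
by apply/eqP; apply: contraT => nq; have := hq nq; rewrite -e1 ltnNge szV.
Qed.
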